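(* Let $p\ge3$ and $h=\lfloor p/2\rfloor$. Let $m,s,n,j$ be integers and $B$ a real number. If $0\le m<n$, $0\le s<n$, $h+2<B$, and $l_\Gamma(t^{-m}a^jt^s)>Bn$, then $|j|>p^{(\frac{1}{h+2}B-2)n}$.
   Context: $G=BS(1,p)=\langle a,t\mid tat^{-1}=a^p\rangle$ with generating set $\{a^{\pm1},t^{\pm1}\}$; for a word $v$, $l_\Gamma(v)$ denotes the word length (length of a geodesic representative in the Cayley graph) of the element of $G$ represented by $v$. *)

(* Defs.v *)
(* Baumslag–Solitar group BS(1,p) = < a, t | t a t^-1 = a^p >
   defined literally by its presentation: words in {a^{±1}, t^{±1}} modulo the
   congruence generated by free cancellation and the defining relator. *)
From Stdlib Require Import Reals Lra Lia ZArith Arith List Classical ClassicalEpsilon Wf_nat Relations.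
Import ListNotations.
Open Scope R_scope.

Inductive gen : Type := GA | GAi | GT | GTi.

Definition ginv (x : gen) : gen :=
  match x with GA => GAi | GAi => GA | GT => GTi | GTi => GT end.

Definition word := list gen.

Inductive bs_step (p : nat) : word -> word -> Prop :=
| bs_free : forall (u v : word) (x : gen),
    bs_step p (u ++ x :: ginv x :: v) (u ++ v)
| bs_rel : forall (u v : word),
    bs_step p (u ++ [GT; GA; GTi] ++ v) (u ++ repeat GA p ++ v).

Definition bs_equiv (p : nat) : word -> word -> Prop :=
  clos_refl_sym_trans word (bs_step p).

Lemma wordlen_min_exists (p : nat) (v : word) :
  exists L : nat, (exists w, bs_equiv p v w /\ length w = L) /\
    forall w, bs_equiv p v w -> (L <= length w)%nat.
Proof.
  destruct (dec_inh_nat_subset_has_unique_least_element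
    (fun L => exists w, bs_equiv p v w /\ length w = L)) as [L [[HL Hmin] _]].
  - intros n; apply classic.
  - exists (length v); exists v; split; [apply rst_refl | reflexivity].
  - exists L; split; [exact HL|].
    intros w Hw; apply Hmin; exists w; split; auto.
Qed.

Definition word_length (p : nat) (v : word) : nat :=
  proj1_sig (constructive_indefinite_description _ (wordlen_min_exists p v)).

Definition apow (j : Z) : word :=
  if (0 <=? j)%Z then repeat GA (Z.to_nat j) else repeat GAi (Z.to_nat (- j)).

Definition tma_word (m j s : Z) : word :=
  repeat GTi (Z.to_nat m) ++ apow j ++ repeat GT (Z.to_nat s).

(* Main.v *)
Require Import Defs.
From Stdlib Require Import Reals ZArith.
From Stdlib Require Import Lra Lia List Setoid Morphisms Relations.
Import ListNotations.
Open Scope R_scope.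

Global Instance bsE_equiv p : Equivalence (bs_equiv p).
Proof.
  constructor.
  - intros x; apply rst_refl.
  - intros x y H; apply rst_sym; exact H.
  - intros x y z H1 H2; eapply rst_trans; eauto.
Qed.

Lemma step_ctx p x y u v : bs_step p u v -> bs_step p (x ++ u ++ y) (x ++ v ++ y).
Proof.
  intros H; destruct H as [u0 v0 g | u0 v0].
  - replace (x ++ (u0 ++ g :: ginv g :: v0) ++ y)
      with ((x++u0) ++ g :: ginv g :: (v0 ++ y))
      by (rewrite <- !app_assoc; simpl; rewrite <- ?app_assoc; reflexivity).
    replace (x ++ (u0 ++ v0) ++ y) with ((x++u0) ++ (v0++y))
      by (rewrite <- !app_assoc; reflexivity).
    constructor.
  - replace (x ++ (u0 ++ [GT; GA; GTi] ++ v0) ++ y)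
      with ((x++u0) ++ [GT; GA; GTi] ++ (v0 ++ y))
      by (rewrite <- !app_assoc; reflexivity).
    replace (x ++ (u0 ++ repeat GA p ++ v0) ++ y)
      with ((x++u0) ++ repeat GA p ++ (v0 ++ y))
      by (rewrite <- !app_assoc; reflexivity).
    constructor.
Qed.

Lemma equiv_ctx p x y u v : bs_equiv p u v -> bs_equiv p (x ++ u ++ y) (x ++ v ++ y).
Proof.
  induction 1.
  - apply rst_step, step_ctx; assumption.
  - apply rst_refl.
  - apply rst_sym; assumption.
  - eapply rst_trans; eauto.
Qed.

Global Instance app_proper p :
  Proper (bs_equiv p ==> bs_equiv p ==> bs_equiv p) (@app gen).
Proof.
  intros a a' Ha b b' Hb.
  transitivity (a' ++ b).
  - exact (equiv_ctx p [] b a a' Ha).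
  - pose proof (equiv_ctx p a' [] b b' Hb) as H. rewrite !app_nil_r in H. exact H.
Qed.

Global Instance cons_proper p x : Proper (bs_equiv p ==> bs_equiv p) (cons x).
Proof.
  intros a b H. change (x :: a) with ([x] ++ a). change (x :: b) with ([x] ++ b).
  rewrite H. reflexivity.
Qed.

Lemma free_E p x w : bs_equiv p (x :: ginv x :: w) w.
Proof. apply rst_step. exact (bs_free p [] w x). Qed.

Lemma rel_E p : bs_equiv p [GT; GA; GTi] (repeat GA p).
Proof.
  apply rst_step. pose proof (bs_rel p [] []) as H. rewrite !app_nil_r in H. exact H.
Qed.

Lemma apow_succ p k : bs_equiv p (apow (k+1)) (GA :: apow k).
Proof.
  unfold apow. destruct (Z.leb_spec 0 k).
  - rewrite (proj2 (Z.leb_le 0 (k+1))) by lia.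
    rewrite Z2Nat.inj_add by lia. rewrite Nat.add_1_r. reflexivity.
  - replace (Z.to_nat (- k)) with (S (Z.to_nat (-(k+1)))) by lia. simpl.
    symmetry. transitivity (repeat GAi (Z.to_nat (- (k + 1)))).
    + apply (free_E p GA).
    + destruct (Z.leb_spec 0 (k+1)).
      * assert (k = -1)%Z by lia. subst. reflexivity.
      * reflexivity.
Qed.

Lemma apow_pred p k : bs_equiv p (apow (k-1)) (GAi :: apow k).
Proof.
  transitivity (GAi :: GA :: apow (k-1)).
  - symmetry. apply (free_E p GAi).
  - rewrite <- apow_succ. replace (k-1+1)%Z with k by ring. reflexivity.
Qed.

Lemma apow_add p a b : bs_equiv p (apow (a+b)) (apow a ++ apow b).
Proof.
  revert b. induction a using Z.peano_ind; intros b.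
  - reflexivity.
  - rewrite <- Z.add_1_r. replace (a+1+b)%Z with ((a+b)+1)%Z by ring.
    rewrite !apow_succ, IHa. reflexivity.
  - rewrite <- Z.sub_1_r. replace (a-1+b)%Z with ((a+b)-1)%Z by ring.
    rewrite !apow_pred, IHa. reflexivity.
Qed.

Definition conj (w : word) : word := [GT] ++ w ++ [GTi].

Global Instance conj_proper p : Proper (bs_equiv p ==> bs_equiv p) conj.
Proof. intros a b H. unfold conj. rewrite H. reflexivity. Qed.

Lemma conj_app p u v : bs_equiv p (conj (u ++ v)) (conj u ++ conj v).
Proof.
  symmetry.
  replace (conj u ++ conj v) with ((GT::u) ++ GTi :: ginv GTi :: (v ++ [GTi]))
    by (unfold conj; simpl; rewrite <- !app_assoc; reflexivity).
  replace (conj (u++v)) with ((GT::u) ++ (v ++ [GTi]))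
    by (unfold conj; simpl; rewrite <- !app_assoc; reflexivity).
  apply rst_step. constructor.
Qed.

Lemma conj_nil p : bs_equiv p (conj []) [].
Proof. exact (free_E p GT []). Qed.

Lemma conj_A p : bs_equiv p (conj [GA]) (apow (Z.of_nat p)).
Proof.
  unfold apow. rewrite (proj2 (Z.leb_le _ _)) by lia. rewrite Nat2Z.id.
  apply rel_E.
Qed.

Lemma conj_Ai p : bs_equiv p (conj [GAi]) (apow (- Z.of_nat p)).
Proof.
  transitivity (conj [GAi] ++ apow (Z.of_nat p + - Z.of_nat p)).
  { replace (Z.of_nat p + - Z.of_nat p)%Z with 0%Z by lia. change (apow 0) with (@nil gen).
    rewrite app_nil_r. reflexivity. }
  rewrite apow_add. rewrite <- conj_A. rewrite app_assoc. rewrite <- conj_app.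
  change ([GAi] ++ [GA]) with [GAi; GA]. rewrite (free_E p GAi [] : bs_equiv p [GAi; GA] []). rewrite conj_nil. reflexivity.
Qed.

Lemma conj_apow p q : bs_equiv p (conj (apow q)) (apow (Z.of_nat p * q)).
Proof.
  induction q using Z.peano_ind.
  - rewrite Z.mul_0_r. apply conj_nil.
  - rewrite <- Z.add_1_r. rewrite apow_succ. change (GA :: apow q) with ([GA] ++ apow q).
    rewrite conj_app, conj_A, IHq, <- apow_add.
    replace (Z.of_nat p + Z.of_nat p * q)%Z with (Z.of_nat p * (q+1))%Z by ring.
    reflexivity.
  - rewrite <- Z.sub_1_r. rewrite apow_pred. change (GAi :: apow q) with ([GAi] ++ apow q).
    rewrite conj_app, conj_Ai, IHq, <- apow_add.
    replace (- Z.of_nat p + Z.of_nat p * q)%Z with (Z.of_nat p * (q-1))%Z by ring.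
    reflexivity.
Qed.

Fixpoint bw (p : nat) (f : nat) (j : Z) : word :=
  match f with
  | O => apow j
  | S f' => let q := ((j + Z.of_nat (Nat.div p 2)) / Z.of_nat p)%Z in
            apow (j - Z.of_nat p * q) ++ conj (bw p f' q)
  end.

Lemma bw_equiv p f j : bs_equiv p (apow j) (bw p f j).
Proof.
  revert j; induction f; intros j; simpl.
  - reflexivity.
  - rewrite <- IHf, conj_apow, <- apow_add.
    rewrite Z.sub_add. reflexivity.
Qed.

Lemma length_apow j : length (apow j) = Z.to_nat (Z.abs j).
Proof.
  unfold apow. destruct (Z.leb_spec 0 j); rewrite repeat_length; lia.
Qed.

Lemma bw_S p f j : bw p (S f) j =
  apow (j - Z.of_nat p * ((j + Z.of_nat (Nat.div p 2)) / Z.of_nat p)) ++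
  conj (bw p f ((j + Z.of_nat (Nat.div p 2)) / Z.of_nat p)).
Proof. reflexivity. Qed.

Lemma length_conj w : length (conj w) = (length w + 2)%nat.
Proof. unfold conj. rewrite !length_app. simpl. lia. Qed.

Lemma bw_len p : (3 <= p)%nat -> forall K j,
  (Z.abs j <= Z.of_nat p ^ Z.of_nat K)%Z ->
  (Z.of_nat (length (bw p (S K) j)) <= (Z.of_nat (Nat.div p 2) + 2) * (Z.of_nat K + 1))%Z.
Proof.
  intros Hp.
  set (H := Z.of_nat (Nat.div p 2)). set (P := Z.of_nat p).
  assert (HH : (2*H <= P <= 2*H+1)%Z).
  { unfold H, P. rewrite Nat2Z.inj_div. change (Z.of_nat 2) with 2%Z.
    pose proof (Z.div_mod (Z.of_nat p) 2 ltac:(lia)).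
    pose proof (Z.mod_pos_bound (Z.of_nat p) 2 ltac:(lia)). lia. }
  assert (HP : (3 <= P)%Z) by (unfold P; lia).
  induction K; intros j Hj.
  - cbn [bw]. fold H P. set (q := ((j + H) / P)%Z).
    pose proof (Z.div_mod (j+H) P ltac:(lia)) as Hd.
    pose proof (Z.mod_pos_bound (j+H) P ltac:(lia)) as Hr.
    fold q in Hd.
    assert (Hj1 : (-1 <= j <= 1)%Z) by (change (Z.of_nat 0) with 0%Z in Hj; rewrite ?Z.pow_0_r in Hj; lia).
    assert (Hlo : (- P < P * q)%Z) by lia.
    assert (Hhi : (P * q < P)%Z) by lia.
    assert (q = 0)%Z by nia. rewrite H0.
    rewrite length_app, length_apow. unfold conj. rewrite !length_app. simpl.
    lia.
  - rewrite bw_S. fold H P. set (q := ((j + H) / P)%Z).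
    pose proof (Z.div_mod (j+H) P ltac:(lia)) as Hd.
    pose proof (Z.mod_pos_bound (j+H) P ltac:(lia)) as Hr.
    fold q in Hd.
    rewrite Nat2Z.inj_succ, Z.pow_succ_r in Hj by lia.
    set (X := (P ^ Z.of_nat K)%Z) in *.
    assert (1 <= X)%Z by (unfold X; pose proof (Z.pow_pos_nonneg P (Z.of_nat K) ltac:(lia) ltac:(lia)); lia).
    assert (Hq : (Z.abs q <= X)%Z) by nia.
    specialize (IHK q Hq).
    change (bw p (S K) q) with (bw p (S K) q) in IHK.
    remember (bw p (S K) q) as bq.
    rewrite length_app, length_apow, length_conj.
    assert (Hdd : (Z.abs (j - P*q) <= H)%Z) by lia.
    nia.
Qed.

Lemma wl_le p v w : bs_equiv p v w -> (word_length p v <= length w)%nat.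
Proof.
  intros Hvw. unfold word_length.
  match goal with |- (proj1_sig ?X <= _)%nat => pose proof (proj2_sig X) as [_ HL] end.
  apply HL; exact Hvw.
Qed.

Theorem lemma6p3 (p : nat) (m s n j : Z) (B : R) :
  (3 <= p)%nat ->
  (0 <= m < n)%Z ->
  (0 <= s < n)%Z ->
  INR (Nat.div p 2) + 2 < B ->
  INR (word_length p (tma_word m j s)) > B * IZR n ->
  IZR (Z.abs j) >
    Rpower (INR p) ((B / (INR (Nat.div p 2) + 2) - 2) * IZR n).
Proof.
  intros Hp Hm Hs HB Hwl.
  apply Rnot_le_gt; intro Hj.
  set (h := Nat.div p 2) in *.
  set (c := B / (INR h + 2) - 2) in *.
  set (x := c * IZR n) in *.
  destruct (archimed x) as [Hup1 Hup2].
  set (K := Z.to_nat (up x)).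
  assert (HxK : x <= INR K).
  { unfold K. destruct (Z_le_gt_dec 0 (up x)).
    - rewrite INR_IZR_INZ, Z2Nat.id by lia. lra.
    - replace (Z.to_nat (up x)) with 0%nat by lia. simpl.
      assert (IZR (up x) <= -1) by (apply IZR_le; lia). lra. }
  assert (HpR : 1 < INR p) by (apply (lt_INR 1); lia).
  assert (HjK : (Z.abs j <= Z.of_nat p ^ Z.of_nat K)%Z).
  { apply le_IZR. rewrite <- pow_IZR, <- INR_IZR_INZ, <- Rpower_pow by lra.
    eapply Rle_trans; [exact Hj|]. apply Rle_Rpower; lra. }
  pose proof (bw_len p Hp K j HjK) as HL.
  set (W := repeat GTi (Z.to_nat m) ++ bw p (S K) j ++ repeat GT (Z.to_nat s)).
  assert (HW : (word_length p (tma_word m j s) <= length W)%nat).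
  { apply wl_le. unfold tma_word, W. apply equiv_ctx. apply bw_equiv. }
  assert (HWz : (Z.of_nat (word_length p (tma_word m j s)) <=
     m + s + (Z.of_nat h + 2) * (Z.of_nat K + 1))%Z).
  { unfold W in HW. rewrite !length_app, !repeat_length in HW. lia. }
  apply IZR_le in HWz.
  rewrite <- INR_IZR_INZ in HWz.
  rewrite !plus_IZR, mult_IZR, !plus_IZR, <- !INR_IZR_INZ in HWz.
  assert (Hmr : IZR m <= IZR n - 1) by (rewrite <- minus_IZR; apply IZR_le; lia).
  assert (Hsr : IZR s <= IZR n - 1) by (rewrite <- minus_IZR; apply IZR_le; lia).
  assert (Hn1 : 1 <= IZR n) by (apply IZR_le; lia).
  assert (Hh0 : 0 <= INR h) by apply pos_INR.
  assert (Hkey : (INR h + 2) * c = B - 2 * (INR h + 2)).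
  { unfold c. field. lra. }
  simpl in HWz.
  destruct (Nat.eq_dec K 0) as [HK0|HK0].
  - rewrite HK0 in HWz. simpl in HWz.
    assert (B * IZR n >= (INR h + 2) * IZR n) by nra.
    nra.
  - assert (HKx : INR K <= x + 1).
    { unfold K in *. assert (0 < up x)%Z by lia.
      rewrite INR_IZR_INZ, Z2Nat.id by lia. lra. }
    assert (Hb : (INR h + 2) * (INR K + 1) <= (INR h + 2) * (c * IZR n + 2)).
    { apply Rmult_le_compat_l; unfold x in HKx; lra. }
    replace ((INR h + 2) * (c * IZR n + 2)) with
      (((INR h + 2) * c) * IZR n + 2 * (INR h + 2)) in Hb by ring.
    rewrite Hkey in Hb.
    assert (0 <= INR h * (IZR n - 1)) by nra.
    nra.
Qed.
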